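(* Let $\boldsymbol{f}\in\mathbb{R}^E$ route the demand $\boldsymbol{d}$ ($\mathbf{B}^\top\boldsymbol{f}=\boldsymbol{d}$) with $\boldsymbol{u}^-_e<\boldsymbol{f}_e<\boldsymbol{u}^+_e$ for all $e$ and $\boldsymbol{c}^\top\boldsymbol{f}>F^*$. Let $\tilde{\boldsymbol{g}}\in\mathbb{R}^E$ satisfy $\|\mathbf{L}(\boldsymbol{f})^{-1}(\tilde{\boldsymbol{g}}-\boldsymbol{g}(\boldsymbol{f}))\|_\infty\le\varepsilon$ for some $\varepsilon<\alpha/2$, and $\tilde{\boldsymbol{\ell}}\in\mathbb{R}^E_{>0}$ satisfy $\tilde{\boldsymbol{\ell}}\approx_2\boldsymbol{\ell}(\boldsymbol{f})$. If $\Phi(\boldsymbol{f})\le200m\log(mU)$ and $\log(\boldsymbol{c}^\top\boldsymbol{f}-F^* )\ge-10\log(mU)$, then $\frac{\tilde{\boldsymbol{g}}^\top(\boldsymbol{f}^*-\boldsymbol{f})}{100m+\|\tilde{\mathbf{L}}(\boldsymbol{f}^*-\boldsymbol{f})\|_1}\le-\alpha/4$, where $\boldsymbol{f}^*$ is an optimal (min-cost) flow.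
   Context: Setting: $G=(V,E)$ is a directed graph with $m=|E|$ edges and edge-vertex incidence matrix $\mathbf{B}$ (row of edge $(a,b)$ has $+1$ at $a$, $-1$ at $b$); demands $\boldsymbol{d}\in\mathbb{Z}^V$, lower/upper capacities $\boldsymbol{u}^-,\boldsymbol{u}^+\in\mathbb{Z}^E$, and costs $\boldsymbol{c}\in\mathbb{Z}^E$ are integers bounded in absolute value by $U$. $\boldsymbol{f}^*\in\arg\min\{\boldsymbol{c}^\top\boldsymbol{f}:\mathbf{B}^\top\boldsymbol{f}=\boldsymbol{d},\ \boldsymbol{u}^-\le\boldsymbol{f}\le\boldsymbol{u}^+\}$ and $F^*=\boldsymbol{c}^\top\boldsymbol{f}^*$. Let $\alpha=1/(1000\log(mU))$ and $\Phi(\boldsymbol{f})=20m\log(\boldsymbol{c}^\top\boldsymbol{f}-F^* )+\sum_{e}\big((\boldsymbol{u}^+_e-\boldsymbol{f}_e)^{-\alpha}+(\boldsymbol{f}_e-\boldsymbol{u}^-_e)^{-\alpha}\big)$. Lengths $\boldsymbol{\ell}(\boldsymbol{f})_e=(\boldsymbol{u}^+_e-\boldsymbol{f}_e)^{-1-\alpha}+(\boldsymbol{f}_e-\boldsymbol{u}^-_e)^{-1-\alpha}$; gradients $\boldsymbol{g}(\boldsymbol{f})=\nabla\Phi(\boldsymbol{f})$, i.e. $\boldsymbol{g}(\boldsymbol{f})_e=20m(\boldsymbol{c}^\top\boldsymbol{f}-F^* )^{-1}\boldsymbol{c}_e+\alpha(\boldsymbol{u}^+_e-\boldsymbol{f}_e)^{-1-\alpha}-\alpha(\boldsymbol{f}_e-\boldsymbol{u}^-_e)^{-1-\alpha}$.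 $\mathbf{L}(\boldsymbol{f})=\mathrm{diag}(\boldsymbol{\ell}(\boldsymbol{f}))$, $\tilde{\mathbf{L}}=\mathrm{diag}(\tilde{\boldsymbol{\ell}})$. $\boldsymbol{x}\approx_\beta\boldsymbol{y}$ means $\beta^{-1}\boldsymbol{y}_i\le\boldsymbol{x}_i\le\beta\boldsymbol{y}_i$ for all $i$. *)

(* Defs.v *)
From HB Require Import structures.
From mathcomp Require Import all_boot all_order all_algebra.
From mathcomp Require Import all_classical all_reals all_analysis.
Set Implicit Arguments. Unset Strict Implicit. Unset Printing Implicit Defensive.
Import Order.TTheory GRing.Theory Num.Theory.
Local Open Scope ring_scope.

Section Defs.
Variable R : realType.
Variables (V E : finType).

Definition incid (tl hd : E -> V) (e : E) (v : V) : R :=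
  (tl e == v)%:R - (hd e == v)%:R.

Definition routes (tl hd : E -> V) (d : V -> int) (f : E -> R) : Prop :=
  forall v : V, \sum_(e : E) incid tl hd e v * f e = (d v)%:~R.

Definition feasible (tl hd : E -> V) (d : V -> int) (um up : E -> int)
  (f : E -> R) : Prop :=
  routes tl hd d f /\ forall e, (um e)%:~R <= f e <= (up e)%:~R.

Definition cost (c : E -> int) (f : E -> R) : R := \sum_(e : E) (c e)%:~R * f e.

Definition alpha (U : nat) : R := (1000 * ln ((#|E| * U)%:R : R))^-1.

Definition Phi (U : nat) (um up c : E -> int) (Fstar : R) (f : E -> R) : R :=
  20 * #|E|%:R * ln (cost c f - Fstar)
  + \sum_(e : E) (((up e)%:~R - f e) `^ (- alpha U)
                 + (f e - (um e)%:~R) `^ (- alpha U)).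

Definition ell (U : nat) (um up : E -> int) (f : E -> R) (e : E) : R :=
  ((up e)%:~R - f e) `^ (-1 - alpha U) + (f e - (um e)%:~R) `^ (-1 - alpha U).

Definition grad (U : nat) (um up c : E -> int) (Fstar : R) (f : E -> R) (e : E) : R :=
  20 * #|E|%:R * (cost c f - Fstar)^-1 * (c e)%:~R
  + alpha U * ((up e)%:~R - f e) `^ (-1 - alpha U)
  - alpha U * (f e - (um e)%:~R) `^ (-1 - alpha U).

Definition approx_by (beta : R) (x y : E -> R) : Prop :=
  forall e, beta^-1 * y e <= x e <= beta * y e.

End Defs.

(* Main.v *)
Require Import Defs.
From HB Require Import structures.
From mathcomp Require Import all_boot all_order all_algebra.
From mathcomp Require Import all_classical all_reals all_analysis.
From mathcomp Require Import ring lra.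
Import Order.TTheory GRing.Theory Num.Theory.
Local Open Scope ring_scope.

Lemma aux_edge (R : realType) (al a b s t D : R) :
  0 <= al -> 0 <= a -> 0 <= b -> 0 <= s -> 0 <= t -> - t <= D -> D <= s ->
  al * (a - b) * D + al * (a + b) * `|D| <= 2 * al * (a * s + b * t).
Proof.
move=> hal ha hb hs ht h1 h2.
have [D0|D0] := lerP 0 D.
- rewrite ger0_norm //.
  have -> : al * (a - b) * D + al * (a + b) * D = 2 * (al * a * D) by ring.
  have -> : 2 * al * (a * s + b * t) = 2 * (al * a * s) + 2 * (al * b * t) by ring.
  have : 0 <= al * b * t by apply: mulr_ge0; [apply: mulr_ge0|lra].
  have : al * a * D <= al * a * s by apply: ler_wpM2l; [apply: mulr_ge0|].
  lra.
- rewrite ltr0_norm //.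
  have -> : al * (a - b) * D + al * (a + b) * - D = 2 * (al * b * - D) by ring.
  have -> : 2 * al * (a * s + b * t) = 2 * (al * a * s) + 2 * (al * b * t) by ring.
  have : 0 <= al * a * s by apply: mulr_ge0; [apply: mulr_ge0|lra].
  have : al * b * (- D) <= al * b * t by apply: ler_wpM2l; [apply: mulr_ge0|lra].
  lra.
Qed.

Lemma ln2_ge (R : realType) : 1/2 <= ln (2 : R).
Proof.
have h := @le_ln1Dx R (-1/2) ltac:(lra).
have e : 1 + (-1/2) = (2 : R)^-1 by field.
rewrite e lnV in h; last by rewrite posrE.
lra.
Qed.

Theorem lemma4p7 (R : realType) (V E : finType) (tl hd : E -> V)
  (d : V -> int) (um up c : E -> int) (U : nat)
  (hd_bd : forall v, `|d v| <= U%:Z) (hum : forall e, `|um e| <= U%:Z)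
  (hup : forall e, `|up e| <= U%:Z) (hc : forall e, `|c e| <= U%:Z)
  (fstar : E -> R)
  (hfs_feas : feasible tl hd d um up fstar)
  (hfs_opt : forall g : E -> R, feasible tl hd d um up g ->
               cost c fstar <= cost c g)
  (f gt lt : E -> R) (eps : R)
  (hf_route : routes tl hd d f)
  (hf_int : forall e, (um e)%:~R < f e < (up e)%:~R)
  (hf_gap : cost c f > cost c fstar)
  (hgt : forall e, `|(ell U um up f e)^-1 *
                    (gt e - grad U um up c (cost c fstar) f e)| <= eps)
  (heps : eps < alpha R E U / 2)
  (hlt_pos : forall e, 0 < lt e)
  (hlt : approx_by 2 lt (ell U um up f))
  (hPhi : Phi U um up c (cost c fstar) f <= 200 * #|E|%:R * ln ((#|E| * U)%:R : R))
  (hgap : ln (cost c f - cost c fstar) >= - 10 * ln ((#|E| * U)%:R : R)) :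
  (\sum_(e : E) gt e * (fstar e - f e)) /
    (100 * #|E|%:R + \sum_(e : E) `|lt e * (fstar e - f e)|)
  <= - (alpha R E U) / 4.
Proof.
have [m0|mpos] := eqVneq #|E| 0%N.
  have nE : forall e : E, False.
    by move=> e; move: (card0_eq m0 e); rewrite inE.
  rewrite [X in X / _]big1; last by move=> e; case: (nE e).
  rewrite [X in _ / (_ + X)]big1; last by move=> e; case: (nE e).
  have -> : alpha R E U = 0 by rewrite /alpha m0 mul0n ln0 // mulr0 invr0.
  by rewrite mul0r oppr0 mul0r.
have mgt : (0 < #|E|)%N by rewrite lt0n.
have [e0 _] := card_gt0P mgt.
set L := ln ((#|E| * U)%:R : R).
have [L0|Lpos] := lerP L 0.
  have : alpha R E U <= 0 by rewrite /alpha invr_le0 -/L; lra.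
  have := hgt e0; have := normr_ge0 ((ell U um up f e0)^-1 *
                    (gt e0 - grad U um up c (cost c fstar) f e0)).
  move=> h1 h2 h3; clear -h1 h2 h3 heps; lra.
clear hd_bd hum hup hc hfs_opt hf_route.
set a := alpha R E U.
have aL : a * L = 1/1000 by rewrite /a /alpha -/L; field; rewrite gt_eqF.
have mU2 : (1 < #|E| * U)%N.
  rewrite ltnNge; apply/negP => h.
  have : L <= 0 by apply: ln_le0; rewrite -(ler_nat R) in h.
  by rewrite leNgt Lpos.
have h2R : (2 : R) <= (#|E| * U)%:R by rewrite ler_nat.
have Lge : 1/2 <= L.
  apply: le_trans (ln2_ge R) _.
  have h0R : (0 : R) < 2 by rewrite ltr0n.
  rewrite /L ler_ln; [exact: h2R | by rewrite posrE; exact: h0R | rewrite posrE; exact: lt_le_trans h0R h2R].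
have apos : 0 < a by rewrite /a /alpha invr_gt0 -/L; apply: mulr_gt0; [rewrite ltr0n | exact: Lpos].
set K := 20 * #|E|%:R * (cost c f - cost c fstar)^-1.
have edge : forall e, gt e * (fstar e - f e) + a/4 * `|lt e * (fstar e - f e)|
   <= K * ((c e)%:~R * (fstar e - f e))
      + 2 * a * (((up e)%:~R - f e) `^ (- a) + (f e - (um e)%:~R) `^ (- a)).
  move=> e.
  have /andP[h1 h2] := hf_int e.
  have [_ hfs] := hfs_feas; have /andP[h3 h4] := hfs e.
  have := hgt e; have := hlt e; rewrite /ell /grad -/a -/K.
  set s := (up e)%:~R - f e; set t := f e - (um e)%:~R.
  have sp : 0 < s by rewrite subr_gt0.
  have tp : 0 < t by rewrite subr_gt0.
  have Ap : 0 < s `^ (-1 - a) by apply: powR_gt0.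
  have Bp : 0 < t `^ (-1 - a) by apply: powR_gt0.
  have hAs : s `^ (-1 - a) * s = s `^ (- a).
    rewrite -{2}(powRr1 (ltW sp)) -powRD; first by congr (_ `^ _); ring.
    by apply/implyP => _; rewrite gt_eqF.
  have hBt : t `^ (-1 - a) * t = t `^ (- a).
    rewrite -{2}(powRr1 (ltW tp)) -powRD; first by congr (_ `^ _); ring.
    by apply/implyP => _; rewrite gt_eqF.
  rewrite -hAs -hBt.
  move: (s `^ (-1 - a)) (t `^ (-1 - a)) Ap Bp => A B Ap Bp.
  move=> /andP[hl1 hl2] hg.
  set D := fstar e - f e.
  have hD1 : - t <= D by rewrite /D /t; clear -h3; lra.
  have hD2 : D <= s by rewrite /D /s; clear -h4; lra.
  have key := @aux_edge R a A B s t D (ltW apos) (ltW Ap) (ltW Bp) (ltW sp) (ltW tp) hD1 hD2.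
  set G := K * (c e)%:~R + a * A - a * B.
  have ABp : 0 < A + B by rewrite addr_gt0.
  have hg2 : `|gt e - G| <= eps * (A + B).
    rewrite normrM gtr0_norm ?invr_gt0 // in hg.
    have := ler_wpM2l (ltW ABp) hg.
    rewrite mulrA mulfV; last by rewrite gt_eqF.
    by rewrite mul1r => h; rewrite /G [eps * _]mulrC; exact: h.
  have hg3 : (gt e - G) * D <= eps * (A + B) * `|D|.
    apply: (le_trans (ler_norm ((gt e - G) * D))); rewrite normrM.
    by apply: ler_wpM2r; [exact: normr_ge0 | exact: hg2].
  rewrite normrM (gtr0_norm (hlt_pos e)).
  have hl3 : lt e * `|D| <= 2 * (A + B) * `|D| by apply: ler_wpM2r.
  have f1 : 0 <= (a / 2 - eps) * ((A + B) * `|D|)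
    by apply: mulr_ge0; [rewrite subr_ge0; exact: ltW | apply: mulr_ge0; [exact: ltW|]].
  have f2 : a / 4 * (lt e * `|D|) <= a / 4 * (2 * (A + B) * `|D|)
    by apply: ler_wpM2l; [apply: divr_ge0; [exact: ltW | by rewrite ler0n] | exact: hl3].
  have E1 : gt e * D = K * ((c e)%:~R * D) + a * (A - B) * D + (gt e - G) * D
    by rewrite /G; ring.
  rewrite E1.
  clear -key hg3 f1 f2.
  lra.
set X := \sum_(e : E) gt e * (fstar e - f e).
set S := \sum_(e : E) `|lt e * (fstar e - f e)|.
set B := \sum_(e : E) (((up e)%:~R - f e) `^ (- a) + (f e - (um e)%:~R) `^ (- a)).
set m := (#|E|%:R : R).
have Hs : X + a / 4 * S <= K * (cost c fstar - cost c f) + 2 * a * B.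
  have -> : cost c fstar - cost c f = \sum_(e : E) (c e)%:~R * (fstar e - f e).
    rewrite /cost -sumrB; apply: eq_bigr => e _; by rewrite mulrBr.
  rewrite /X /S /B !mulr_sumr -!big_split /=.
  by apply: ler_sum => e _; exact: edge.
have gap0 : cost c f - cost c fstar != 0 by rewrite gt_eqF // subr_gt0.
have hK : K * (cost c fstar - cost c f) = - (20 * m).
  rewrite /K /m; field; exact: gap0.
rewrite hK in Hs.
have hP : 20 * m * ln (cost c f - cost c fstar) + B <= 200 * m * L by exact: hPhi.
have mp : 0 < m by rewrite /m ltr0n.
have f3 : 0 <= m * (ln (cost c f - cost c fstar) + 10 * L).
  apply: mulr_ge0; first exact: ltW.
  rewrite -/L in hgap; clear -hgap; lra.
have f4 : 0 <= a * (400 * m * L - B).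
  apply: mulr_ge0; first exact: ltW.
  clear -hP f3; lra.
have f5 : m * L * a = m / 1000 by rewrite -mulrA [L * a]mulrC aL; field.
have a500 : a <= 1/500.
  have f6 : 0 <= a * (L - 1/2) by apply: mulr_ge0; [exact: ltW | rewrite subr_ge0].
  clear -f6 aL; lra.
have f7 : 0 <= m * (1/500 - a) by apply: mulr_ge0; [exact: ltW | rewrite subr_ge0].
have Sp : 0 <= S by apply: sumr_ge0 => e _; exact: normr_ge0.
rewrite ler_pdivrMr; last first.
  by apply: ltr_wpDr; [exact: Sp | apply: mulr_gt0; [rewrite ltr0n | exact: mp]].
clear -Hs f4 f5 f7 Sp mp; lra.
Qed.
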